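(* For every integer $q\ge 11$ there exists an $\mathcal{SOS}_q(3)$ of period $\frac{q^3-6q^2+2q}{2}$ if $q\equiv 0\pmod 4$, $\frac{q^3-6q^2-q}{2}$ if $q\equiv 1\pmod 4$, $\frac{q^3-8q^2+6q}{2}$ if $q\equiv 2\pmod 4$, and $\frac{q^3-4q^2-3q}{2}$ if $q\equiv 3\pmod 4$.
   Context: For a periodic sequence $S=(s_i)$ over $\mathbb{Z}_q$ write $\mathbf{s}_n(i)=(s_i,\ldots,s_{i+n-1})$; $\mathbf{u}^R$ denotes the reverse of a tuple and $-\mathbf{u}$ its termwise negative. An $\mathcal{SOS}_q(n)$ is a periodic sequence of period $m$ over $\mathbb{Z}_q$ such that $\mathbf{s}_n(i)=\mathbf{s}_n(j)$ implies $i\equiv j\pmod m$, and $\mathbf{s}_n(i)\neq\mathbf{s}_n(j)^R$ and $\mathbf{s}_n(i)\neq-\mathbf{s}_n(j)^R$ for all $i,j$. *)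

(* Defs.v *)
From mathcomp Require Import all_boot all_algebra.
Set Implicit Arguments. Unset Strict Implicit. Unset Printing Implicit Defensive.
Import GRing.Theory.
Local Open Scope ring_scope.

Definition window (q : nat) (s : nat -> 'Z_q) (n i : nat) : {ffun 'I_n -> 'Z_q} :=
  [ffun k : 'I_n => s (i + k)%N].

Definition rev_tuple (q n : nat) (u : {ffun 'I_n -> 'Z_q}) : {ffun 'I_n -> 'Z_q} :=
  [ffun k : 'I_n => u (rev_ord k)].

Definition neg_tuple (q n : nat) (u : {ffun 'I_n -> 'Z_q}) : {ffun 'I_n -> 'Z_q} :=
  [ffun k : 'I_n => - u k].

Definition periodic (q : nat) (s : nat -> 'Z_q) (m : nat) : Prop :=
  (0 < m)%N /\ forall i, s (i + m)%N = s i.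

Definition is_SOS (q n m : nat) (s : nat -> 'Z_q) : Prop :=
  periodic s m /\
  (forall i j, window s n i = window s n j -> i = j %[mod m]) /\
  (forall i j, window s n i <> rev_tuple (window s n j)) /\
  (forall i j, window s n i <> neg_tuple (rev_tuple (window s n j))).

(* the period from Corollary 5.3; numerators are nonnegative integers for q >= 11 *)
Definition cor53_period (q : nat) : nat :=
  match (q %% 4)%N with
  | 0 => (q ^ 3 + 2 * q - 6 * q ^ 2) %/ 2
  | 1 => (q ^ 3 - 6 * q ^ 2 - q) %/ 2
  | 2 => (q ^ 3 + 6 * q - 8 * q ^ 2) %/ 2
  | _ => (q ^ 3 - 4 * q ^ 2 - 3 * q) %/ 2
  end%N.

(* Main.v *)
Require Import Defs.
From mathcomp Require Import all_boot all_algebra.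
From mathcomp Require Import zify ring lra.
Set Implicit Arguments. Unset Strict Implicit. Unset Printing Implicit Defensive.
Import GRing.Theory Num.Theory.

Section Gen.
Variable T : eqType.

Fixpoint lp (s : seq T) : seq (T * T) :=
  match s with
  | x :: ((y :: _) as t) => (x, y) :: lp t
  | _ => [::]
  end.
Arguments lp : simpl never.

Lemma lp_cons2 x y s : lp (x :: y :: s) = (x, y) :: lp (y :: s).
Proof. by []. Qed.

Lemma lp_cat x s t : lp (s ++ x :: t) = lp (rcons s x) ++ lp (x :: t).
Proof.
elim: s => [|y s IH] //=.
case: s IH => [|z s] IH //.
change (lp (y :: z :: (s ++ x :: t)) = lp (y :: z :: rcons s x) ++ lp (x :: t)).
by rewrite !lp_cons2 -cat_cons IH.
Qed.

Lemma size_lp s : size (lp s) = (size s).-1.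
Proof. elim: s => [|x [|y s] IH] //=. by rewrite IH. Qed.

Lemma nth_lp d d2 s r : r.+1 < size s -> nth d2 (lp s) r = (nth d s r, nth d s r.+1).
Proof.
elim: s r => [|x [|y s] IH] [|r] //= H.
by rewrite IH.
Qed.

Definition cp (d : T) (s : seq T) := lp (rcons s (head d s)).

Lemma cp_cat d h a b : cp d (h :: a ++ h :: b) = cp d (h :: a) ++ cp d (h :: b).
Proof.
rewrite /cp /= rcons_cat -cat_cons lp_cat. by [].
Qed.

Lemma cp_rot d a b : a != [::] -> b != [::] -> perm_eq (cp d (b ++ a)) (cp d (a ++ b)).
Proof.
case: a => [|ha a] // _; case: b => [|hb b] // _.
rewrite /cp /= !rcons_cat !rcons_cons -!cat_cons !lp_cat.
by rewrite perm_catC -!rcons_cons.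
Qed.

Lemma cp_flatten d h (ss : seq (seq T)) : ss != [::] ->
  (forall s, s \in ss -> exists t, s = h :: t) ->
  cp d (flatten ss) = flatten (map (cp d) ss).
Proof.
elim: ss => [|s ss IH] // _ H.
have [t ->] := H s (mem_head _ _).
case: ss IH H => [|s2 ss] IH H; first by rewrite /= !cats0.
have [t2 e2] : exists t2, s2 = h :: t2 by apply: H; rewrite !inE eqxx orbT.
rewrite /= e2 cat_cons cp_cat -cat_cons -e2.
have -> : s2 ++ flatten ss = flatten (s2 :: ss) by [].
rewrite IH // => s' Hs'; apply: H; by rewrite inE Hs' orbT.
Qed.

Lemma uniq_flatten_key (I : eqType) (f : I -> seq T) (key : T -> I) s :
  uniq s -> (forall i, i \in s -> uniq (f i)) ->
  (forall i x, i \in s -> x \in f i -> key x = i) -> uniq (flatten (map f s)).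
Proof.
elim: s => [|i s IH] //= /andP[ni us] Hu Hk.
rewrite cat_uniq Hu ?mem_head // IH //; last first.
- by move=> j x js; apply: Hk; rewrite inE js orbT.
- by move=> j js; apply: Hu; rewrite inE js orbT.
rewrite andbT; apply/hasPn => x /flattenP [y /mapP [j js ->] xj].
apply/negP => xi.
have e1 := Hk i x (mem_head _ _) xi.
have e2 : key x = j by apply: Hk xj; rewrite inE js orbT.
by move: ni; rewrite -e1 e2 js.
Qed.

End Gen.

Lemma perm_flatten_map (I T : eqType) (f g : I -> seq T) s :
  (forall x, perm_eq (f x) (g x)) -> perm_eq (flatten (map f s)) (flatten (map g s)).
Proof.
move=> H; elim: s => [|x s IH] //=. by rewrite perm_cat.
Qed.

Section Concrete.
Local Open Scope ring_scope.

Definition blk (j i : nat) : seq int := [:: j%:Z; - i%:Z; - j%:Z; i%:Z].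
Definition bp (j i : nat) : seq (int * int) :=
  [:: (j%:Z, - i%:Z); (- i%:Z, - j%:Z); (- j%:Z, i%:Z); (i%:Z, j%:Z)].

Lemma cp_blk j i : cp 0 (blk j i) = bp j i.
Proof. by []. Qed.

Definition grp (j m : nat) : seq int :=
  1 :: flatten [seq blk j i | i <- iota 2 m] ++ [:: j%:Z; -1; - j%:Z].

Lemma cp_grp j m : perm_eq (cp 0 (grp j m)) (flatten [seq bp j i | i <- iota 1 m.+1]).
Proof.
have -> : grp j m = (1 :: flatten [seq blk j i | i <- iota 2 m]) ++ [:: j%:Z; -1; - j%:Z].
  by rewrite /grp cat_cons.
apply: perm_trans (cp_rot _ _ _) _ => //.
have -> : [:: j%:Z; -1; - j%:Z] ++ 1 :: flatten [seq blk j i | i <- iota 2 m]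
   = flatten [seq blk j i | i <- iota 1 m.+1] by [].
rewrite (@cp_flatten _ 0 j%:Z) //; last first.
  by move=> s /mapP [i _ ->]; exists [:: - i%:Z; - j%:Z; i%:Z].
by rewrite -map_comp.
Qed.

Definition Pre : seq int := [:: 1; 0; 2; 1; -2; 3; -1; 0; -3].

Definition W (n : nat) (mf : nat -> nat) : seq int :=
  flatten (Pre :: [seq grp j (mf j) | j <- iota 4 (n - 3)]).

Definition Big (n : nat) (mf : nat -> nat) : seq (int * int) :=
  flatten [seq flatten [seq bp j i | i <- iota 1 (mf j).+1] | j <- iota 4 (n - 3)].

Lemma cp_W n mf : perm_eq (cp 0 (W n mf)) (cp 0 Pre ++ Big n mf).
Proof.
rewrite /W (@cp_flatten _ 0 1) //; last first.
  move=> s; rewrite inE => /orP [/eqP -> | /mapP [j _ ->]].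
    by exists (behead Pre).
  by exists (flatten [seq blk j i | i <- iota 2 (mf j)] ++ [:: j%:Z; -1; - j%:Z]).
rewrite map_cons (_ : forall (X : eqType) (x : seq X) s, flatten (x :: s) = x ++ flatten s) //.
rewrite perm_cat2l /Big -map_comp.
by apply: perm_flatten_map => j /=; apply: cp_grp.
Qed.

Definition kmax (p : int * int) : nat := maxn `|p.1|%N `|p.2|%N.
Definition kmin (p : int * int) : nat := minn `|p.1|%N `|p.2|%N.

Lemma bp_key j i x : (0 < i < j)%N -> x \in bp j i -> kmax x = j /\ kmin x = i.
Proof.
move=> /andP [i0 ij]; rewrite !inE /kmax /kmin.
have h1 : maxn j i = j by apply/maxn_idPl; apply: ltnW.
have h2 : maxn i j = j by apply/maxn_idPr; apply: ltnW.
have h3 : minn j i = i by apply/minn_idPr; apply: ltnW.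
have h4 : minn i j = i by apply/minn_idPl; apply: ltnW.
by case/or4P => /eqP -> /=; rewrite ?abszN ?absz_nat.
Qed.


Lemma mem_Big n mf x : x \in Big n mf ->
  exists j i, [/\ (4 <= j <= n)%N, (0 < i <= (mf j).+1)%N & x \in bp j i].
Proof.
case/flattenP => s /mapP [j jin ->] /flattenP [s' /mapP [i iin ->]] xin.
exists j, i; split => //.
  by move: jin; rewrite mem_iota; lia.
by move: iin; rewrite mem_iota; lia.
Qed.

Lemma uniq_Big n mf : (forall j, (4 <= j)%N -> ((mf j).+1 < j)%N) -> uniq (Big n mf).
Proof.
move=> Hm.
apply: (uniq_flatten_key (key := kmax)); first exact: iota_uniq.
  move=> j jin; have j4 : (4 <= j)%N by move: jin; rewrite mem_iota; lia.
  apply: (uniq_flatten_key (key := kmin)); first exact: iota_uniq.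
    move=> i iin; have : (0 < i < j)%N by move: iin (Hm j j4); rewrite mem_iota; lia.
    case/andP => i0 ij.
    rewrite /bp /= !inE !xpair_eqE; apply/and4P; split => //; apply/negP;
     rewrite ?negb_or; lia.
  move=> i x iin xin; have : (0 < i < j)%N by move: iin (Hm j j4); rewrite mem_iota; lia.
  by move=> h; case: (bp_key h xin).
move=> j x jin /flattenP [s' /mapP [i iin ->]] xin.
have j4 : (4 <= j)%N by move: jin; rewrite mem_iota; lia.
have : (0 < i < j)%N by move: iin (Hm j j4); rewrite mem_iota; lia.
by move=> h; case: (bp_key h xin).
Qed.
Definition sw (p : int * int) := (p.2, p.1).
Definition rv (p : int * int) := (- p.2, - p.1).

Lemma kmax_sw x : kmax (sw x) = kmax x. Proof. by rewrite /kmax maxnC. Qed.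
Lemma kmax_rv x : kmax (rv x) = kmax x. Proof. by rewrite /kmax /= !abszN maxnC. Qed.
Lemma kmin_sw x : kmin (sw x) = kmin x. Proof. by rewrite /kmin minnC. Qed.
Lemma kmin_rv x : kmin (rv x) = kmin x. Proof. by rewrite /kmin /= !abszN minnC. Qed.

Lemma Pre_small x : x \in cp 0 Pre -> (kmax x <= 3)%N.
Proof.
have H : all (fun x => kmax x <= 3)%N (cp 0 Pre) by vm_compute.
by move/allP: H; apply.
Qed.

Lemma Pre_good x y : x \in cp 0 Pre -> y \in cp 0 Pre -> (y != sw x) && (y != rv x).
Proof.
have H : all (fun x => all (fun y => (y != sw x) && (y != rv x)) (cp 0 Pre)) (cp 0 Pre)
  by vm_compute.
by move=> xi yi; move/allP: H => /(_ x xi) /allP /(_ y yi).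
Qed.


Lemma bp_good j i x y : (0 < i < j)%N -> x \in bp j i -> y \in bp j i ->
  (y != sw x) && (y != rv x).
Proof.
move=> /andP [i0 ij].
have hi : (0 < i%:Z)%R by rewrite ltz_nat.
have hij : (i%:Z < j%:Z)%R by rewrite ltz_nat.
rewrite /bp; move: i0 ij hi hij; move: (i%:Z) (j%:Z) => a b _ _ ha hab.
rewrite !inE => /or4P [] /eqP -> /or4P [] /eqP -> /=;
  rewrite /sw /rv /= ?opprK; apply/andP; split; apply/negP => /eqP [];
  move=> *; lia.
Qed.

Lemma good n mf x y : (forall j, (4 <= j)%N -> ((mf j).+1 < j)%N) ->
  x \in cp 0 Pre ++ Big n mf -> y \in cp 0 Pre ++ Big n mf ->
  (y != sw x) && (y != rv x).
Proof.
move=> Hm; rewrite !mem_cat.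
have bigk : forall z, z \in Big n mf -> exists j i, [/\ (0 < i < j)%N, (4 <= j)%N & z \in bp j i].
  move=> z /mem_Big [j [i [/andP [j4 jn] /andP [i0 im] h3]]]; exists j, i; split => //.
  by rewrite i0 (leq_ltn_trans im (Hm j j4)).
have bigk4 : forall z, z \in Big n mf -> (4 <= kmax z)%N.
  move=> z /bigk [j [i [h1 h2 h3]]]; by case: (bp_key h1 h3) => ->.
case/orP => [xP|xB]; case/orP => [yP|yB].
- exact: Pre_good.
- have k1 := bigk4 y yB; have k2 := Pre_small xP.
  by apply/andP; split; apply/eqP => e; move: k1; rewrite e ?kmax_sw ?kmax_rv => k1; move: (leq_trans k1 k2).
- have k1 := bigk4 x xB; have k2 := Pre_small yP.
  by apply/andP; split; apply/eqP => e; move: k2; rewrite e ?kmax_sw ?kmax_rv => k2; move: (leq_trans k1 k2).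
- have [j [i [h1 h2 h3]]] := bigk x xB.
  have [j' [i' [h1' h2' h3']]] := bigk y yB.
  have [ex nx] := bp_key h1 h3.
  have [ey ny] := bp_key h1' h3'.
  have G := bp_good h1 h3.
  apply/andP; split; apply/eqP => e.
  + have ejj : j' = j by rewrite -ey -ex e kmax_sw.
    have eii : i' = i by rewrite -ny -nx e kmin_sw.
    move: h3'; rewrite ejj eii => h3'.
    by move/andP: (G y h3') => [/eqP []].
  + have ejj : j' = j by rewrite -ey -ex e kmax_rv.
    have eii : i' = i by rewrite -ny -nx e kmin_rv.
    move: h3'; rewrite ejj eii => h3'.
    by move/andP: (G y h3') => [_ /eqP []].
Qed.


End Concrete.

Local Open Scope ring_scope.

Lemma zq_nat0 q k : (1 < q)%N -> (k < q)%N -> (k%:R : 'Z_q) = 0 -> k = 0%N.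
Proof.
move=> q1 kq /(congr1 (@nat_of_ord _)); rewrite val_Zp_nat // modn_small //.
Qed.

Lemma zq_int0 q (z : int) : (1 < q)%N -> (`|z| < q)%N -> (z%:~R : 'Z_q) = 0 -> z = 0.
Proof.
move=> q1; case: z => k /= kq.
  by rewrite -pmulrn => /(zq_nat0 q1 kq) ->.
rewrite NegzE intrN -pmulrn => /eqP; rewrite oppr_eq0 => /eqP /(zq_nat0 q1 kq).
by [].
Qed.

Lemma zq_inj q (x y : int) : (1 < q)%N -> (`|x| * 2 < q)%N -> (`|y| * 2 < q)%N ->
  (x%:~R : 'Z_q) = y%:~R -> x = y.
Proof.
move=> q1 hx hy e.
have : (x - y) = 0.
  apply: (zq_int0 q1); last by rewrite intrD intrN e subrr.
  lia.
by move/eqP; rewrite subr_eq0 => /eqP.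
Qed.

Lemma transfer q (W : seq int) :
  (1 < q)%N -> W != [::] ->
  uniq (cp 0 W) ->
  (forall x y, x \in cp 0 W -> y \in cp 0 W -> (y != sw x) && (y != rv x)) ->
  (forall x, x \in W -> (`|x| * 2 < q)%N) ->
  \sum_(x <- W) x = 1 ->
  exists s : nat -> 'Z_q, is_SOS 3 (q * size W) s.
Proof.
move=> q1 Wn0 Hu Hg Hb Hs.
have L0 : (0 < size W)%N by case: W Wn0 {Hu Hg Hb Hs}.
set L := size W in L0 *.
pose u (p : nat) : 'Z_q := (nth 0 W (p %% L))%:~R.
pose s (p : nat) : 'Z_q := \sum_(t < p) u t.
have sS p : s p.+1 = s p + u p by rewrite /s big_ord_recr.
have uL p : u (p + L)%N = u p by rewrite /u modnDr.
have sL p : s (p + L)%N = s p + s L.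
  elim: p => [|p IH]; first by rewrite /s big_ord0 add0r.
  by rewrite addSn sS IH sS uL addrAC.
have sL1 : s L = 1.
  rewrite /s (eq_bigr (fun t : 'I_L => 1 *~ (nth 0 W t))); last first.
    by move=> t _; rewrite /u modn_small.
  rewrite -(big_mkord xpredT (fun t => 1 *~ (nth 0 W t))) -mulrz_sumr.
  by rewrite /L -(big_nth 0 xpredT id) Hs.
have sd p d : s (p + d * L)%N = s p + d%:R.
  elim: d => [|d IH]; first by rewrite mul0n addn0 addr0.
  by rewrite mulSn addnCA addnC sL IH sL1 mulrSr addrA.
pose pr p := (nth 0 W (p %% L), nth 0 W (p.+1 %% L)).
have szcp : size (cp 0 W) = L by rewrite /cp size_lp size_rcons.
have nth_cp r : (r < L)%N -> nth (0,0) (cp 0 W) r = (nth 0 W r, nth 0 W (r.+1 %% L)).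
  move=> rL; rewrite /cp (nth_lp 0) ?size_rcons ?ltnS // !nth_rcons rL.
  case: (ltngtP r.+1 L) => h.
  - by rewrite modn_small.
  - by move: h; rewrite ltnNge rL.
  - by rewrite h modnn; case: (W) Wn0.
have prin p : pr p = nth (0,0) (cp 0 W) (p %% L).
  rewrite nth_cp ?ltn_pmod //.
  by rewrite /pr -[in LHS]addn1 -modnDml addn1.
have mem_pr p : pr p \in cp 0 W by rewrite prin mem_nth // szcp ltn_pmod.
have pr_inj p p' : pr p = pr p' -> (p %% L = p' %% L)%N.
  rewrite !prin => /eqP; rewrite nth_uniq ?szcp ?ltn_pmod //; by move/eqP.
have ub p : (`| nth (0:int) W (p %% L) | * 2 < q)%N by apply: Hb; rewrite mem_nth // ltn_pmod.
have u_inj p p' : u p = u p' -> nth 0 W (p %% L) = nth 0 W (p' %% L).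
  by move/zq_inj; apply.
have u_neg p p' : u p = - u p' -> nth 0 W (p %% L) = - nth 0 W (p' %% L).
  by rewrite /u -intrN => /zq_inj; apply => //; rewrite abszN.
have us p : u p = s p.+1 - s p by rewrite sS addrAC subrr add0r.
have q0 : (0 < q)%N by apply: ltnW.
exists s; split; [|split; [|split]].
- split; first by rewrite muln_gt0 q0.
  by move=> i; rewrite sd pchar_Zp // addr0.
- have key i j : (i <= j)%N -> i = j %[mod L] -> s i = s j -> i = j %[mod q * L].
    move=> ij hm hs.
    have : (L %| j - i)%N by rewrite -eqn_mod_dvd // eq_sym; apply/eqP.
    case/dvdnP => d hd.
    have hj : j = (i + d * L)%N by rewrite -hd subnKC.
    move: hs; rewrite hj sd => hs.
    have : (d%:R : 'Z_q) = 0 by apply: (@addrI _ (s i)); rewrite addr0 -hs.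
    move/(congr1 (@nat_of_ord _)); rewrite val_Zp_nat //= => /eqP.
    rewrite -/(dvdn q d) => /dvdnP [e ->].
    by rewrite -mulnA addnC modnMDl.
  move=> i j H.
  have e k (hk : (k < 3)%N) : s (i + k)%N = s (j + k)%N.
    by have := congr1 (fun f : {ffun 'I_3 -> 'Z_q} => f (Ordinal hk)) H; rewrite !ffunE.
  have e0 := e 0%N isT; have e1 := e 1%N isT; have e2 := e 2%N isT.
  rewrite !addn0 !addn1 !addn2 in e0 e1 e2.
  have hm : i = j %[mod L].
    apply: pr_inj; rewrite /pr.
    by rewrite (u_inj i j) ?(u_inj i.+1 j.+1) // !us ?e0 ?e1 ?e2.
  case: (leqP i j) => ij; first exact: key.
  apply/esym/key; [exact: ltnW | by [] | by []].
- move=> i j H.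
  have e k (hk : (k < 3)%N) : s (i + k)%N = s (j + (3 - k.+1))%N.
    by have := congr1 (fun f : {ffun 'I_3 -> 'Z_q} => f (Ordinal hk)) H; rewrite !ffunE.
  have e0 := e 0%N isT; have e1 := e 1%N isT; have e2 := e 2%N isT.
  rewrite /= !addn0 !addn1 !addn2 in e0 e1 e2.
  have : pr i = rv (pr j).
    rewrite /pr /rv /=.
    rewrite (u_neg i j.+1) ?(u_neg i.+1 j) //.
      by rewrite !us e1 e2 opprB.
    by rewrite !us e0 e1 opprB.
  by move=> h; move: (Hg _ _ (mem_pr j) (mem_pr i)); rewrite h eqxx andbF.
- move=> i j H.
  have e k (hk : (k < 3)%N) : s (i + k)%N = - s (j + (3 - k.+1))%N.
    by have := congr1 (fun f : {ffun 'I_3 -> 'Z_q} => f (Ordinal hk)) H; rewrite !ffunE.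
  have e0 := e 0%N isT; have e1 := e 1%N isT; have e2 := e 2%N isT.
  rewrite /= !addn0 !addn1 !addn2 in e0 e1 e2.
  have : pr i = sw (pr j).
    rewrite /pr /sw /=.
    rewrite (u_inj i j.+1) ?(u_inj i.+1 j) //.
      by rewrite !us e1 e2 opprK addrC.
    by rewrite !us e0 e1 opprK addrC.
  by move=> h; move: (Hg _ _ (mem_pr j) (mem_pr i)); rewrite h eqxx.
Qed.


Lemma arith3 t : (2 <= t)%N -> let q := (4 * t + 3)%N in let n := (2 * t + 1)%N in
  ((q ^ 3 - 4 * q ^ 2 - 3 * q) %/ 2 = q * (9 + (2 * n * (n - 1) - 12)))%N.
Proof.
move=> t2 q n.
have -> : (q ^ 3 - 4 * q ^ 2 - 3 * q = 2 * (q * (9 + (2 * n * (n - 1) - 12))))%N.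
  rewrite /q /n !expnS expn0 !muln1.
  have h1 : (2 * (2 * t + 1) * (2 * t + 1 - 1) = 8 * t * t + 4 * t)%N by nia.
  rewrite h1. nia.
by rewrite mulKn.
Qed.

Local Open Scope ring_scope.

Lemma size_fblk j s : size (flatten [seq blk j i | i <- s]) = (4 * size s)%N.
Proof. elim: s => [|i s IH] //. rewrite map_cons /= IH; lia. Qed.

Lemma size_grp j m : size (grp j m) = (4 * m.+1)%N.
Proof. rewrite /grp /= size_cat size_fblk size_iota /=. lia. Qed.

Lemma size_W n mf : size (W n mf) = (9 + \sum_(j <- iota 4 (n - 3)) 4 * (mf j).+1)%N.
Proof.
rewrite /W size_flatten /shape /= sumnE !big_map.
by under eq_bigr do rewrite size_grp.
Qed.

Lemma sum_grp j m : \sum_(x <- grp j m) x = 0.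
Proof.
rewrite /grp big_cons big_cat big_flatten /= big_map big1; last first.
  by move=> i _; rewrite !big_cons big_nil /=; ring.
rewrite !big_cons big_nil; ring.
Qed.

Lemma sum_W n mf : \sum_(x <- W n mf) x = 1.
Proof.
rewrite /W big_flatten /= big_cons big_map.
rewrite [X in _ + X](eq_bigr (fun _ => 0)); last by move=> j _; apply: sum_grp.
rewrite big1_eq addr0 /Pre !big_cons big_nil; ring.
Qed.

Lemma bound_W n mf x : (3 <= n)%N -> (forall j, (4 <= j)%N -> ((mf j).+1 < j)%N) ->
  x \in W n mf -> (`|x| <= n)%N.
Proof.
move=> n3 Hm /flattenP [s]; rewrite inE => /orP [/eqP -> | /mapP [j jin ->]].
  move=> xP; apply: leq_trans n3.
  have H : all (fun x : int => `|x| <= 3)%N Pre by [].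
  by move/allP: H; apply.
have /andP [j4 jn] : (4 <= j <= n)%N by move: jin; rewrite mem_iota; lia.
have mj := Hm j j4.
rewrite /grp inE mem_cat => /orP [/eqP -> | /orP [/flattenP [b /mapP [i iin ->]] | ]].
- by apply: leq_trans n3.
- have : (i < j)%N by move: iin; rewrite mem_iota; lia.
  rewrite !inE => ij /or4P [] /eqP -> /=; rewrite ?abszN /=; lia.
- rewrite !inE => /or3P [] /eqP -> /=; rewrite ?abszN /=; lia.
Qed.

Definition mfq n j := if (j == n) && ~~ odd n then (n./2 - 2)%N else (j - 2)%N.

Lemma mfq_ok n j : (4 <= j)%N -> ((mfq n j).+1 < j)%N.
Proof. rewrite /mfq; case: ifP => [/andP [/eqP -> _]|_]; lia. Qed.

Lemma sum_lin k : (\sum_(j <- iota 4 k) 4 * (j - 2).+1 + 12 = 2 * (k + 3) * (k + 2))%N.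
Proof.
elim: k => [|k IH]; first by rewrite big_nil.
rewrite -[k.+1]addn1 iotaD big_cat big_cons big_nil.
move: IH; set S := \sum_(_ <- _) _; move=> IH.
have -> : (4 + k - 2 = k + 2)%N by lia.
rewrite /= addn0 -addnA addnC -addnA (addnC 12) IH; nia.
Qed.

Lemma size_odd n : odd n -> (3 <= n)%N ->
  size (W n (mfq n)) = (9 + (2 * n * (n - 1) - 12))%N.
Proof.
move=> on n3; rewrite size_W.
under eq_bigr => j _ do rewrite /mfq on andbF.
have := sum_lin (n - 3).
have -> : (n - 3 + 3 = n)%N by lia.
have -> : (n - 3 + 2 = n - 1)%N by lia.
move=> h; have : (12 <= 2 * n * (n - 1))%N by nia.
lia.
Qed.

Lemma size_even n : ~~ odd n -> (4 <= n)%N ->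
  size (W n (mfq n)) = (9 + (2 * (n - 1) * (n - 2) - 12) + 4 * (n./2 - 2).+1)%N.
Proof.
move=> en n4; rewrite size_W.
have -> : (n - 3 = (n - 4) + 1)%N by lia.
rewrite iotaD big_cat big_cons big_nil.
have -> : (4 + (n - 4) = n)%N by lia.
rewrite /mfq eqxx en /= addn0.
rewrite (eq_big_seq (fun j => 4 * (j - 2).+1)%N); last first.
  move=> j; rewrite mem_iota => jr.
  have -> : (j == n) = false by apply/negbTE; lia.
  by [].
have := sum_lin (n - 4).
have -> : (n - 4 + 3 = n - 1)%N by lia.
have -> : (n - 4 + 2 = n - 2)%N by lia.
move=> h; have : (12 <= 2 * (n - 1) * (n - 2))%N by nia.
by move=> _; rewrite -h addnK addnA.
Qed.

Lemma div2_help a b : a = (2 * b)%N -> (a %/ 2 = b)%N.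
Proof. by move=> ->; rewrite mulKn. Qed.

Lemma L_odd s : (9 + (2 * (2 * s + 5) * (2 * s + 5 - 1) - 12) = 8 * s * s + 36 * s + 37)%N.
Proof.
have -> : (2 * s + 5 - 1 = 2 * s + 4)%N by lia.
have -> : (2 * (2 * s + 5) * (2 * s + 4) = 8 * s * s + 36 * s + 40)%N by ring.
lia.
Qed.

Lemma L_even s : (9 + (2 * (2 * s + 6 - 1) * (2 * s + 6 - 2) - 12) + 4 * ((2 * s + 6)./2 - 2).+1
   = 8 * s * s + 40 * s + 45)%N.
Proof.
have -> : (2 * s + 6 - 1 = 2 * s + 5)%N by lia.
have -> : (2 * s + 6 - 2 = 2 * s + 4)%N by lia.
have -> : ((2 * s + 6)./2 - 2 = s + 1)%N by lia.
have -> : (2 * (2 * s + 5) * (2 * s + 4) = 8 * s * s + 36 * s + 40)%N by ring.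
lia.
Qed.

Lemma period_eq q : (11 <= q)%N ->
  cor53_period q = (q * size (W (q.-1./2) (mfq (q.-1./2))))%N.
Proof.
move=> q11; set n := q.-1./2.
have [t [r [hq hr]]] : exists t r, q = (4 * t + r)%N /\ (r < 4)%N.
  by exists (q %/ 4)%N, (q %% 4)%N; split; [rewrite {1}(divn_eq q 4); lia | rewrite ltn_mod].
have hm : (q %% 4 = r)%N by rewrite hq; lia.
rewrite /cor53_period hm.
case: r hr hq hm => [|[|[|[|r]]]] // _ hq _.
- have [s hs] : exists s, t = (s + 3)%N by exists (t - 3)%N; lia.
  have hn : n = (2 * s + 5)%N by rewrite /n hq hs; lia.
  rewrite size_odd ?hn; [rewrite L_odd| lia | lia].
  set L := (8 * s * s + 36 * s + 37)%N.
  have E : (2 * (q * L) + 6 * q ^ 2 = q ^ 3 + 2 * q)%N by rewrite hq hs /L; ring.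
  apply: div2_help; move: E; set X := (q * L)%N; set Y := (q ^ 2)%N; set Z := (q ^ 3)%N; lia.
- have [s hs] : exists s, t = (s + 3)%N by exists (t - 3)%N; lia.
  have hn : n = (2 * s + 6)%N by rewrite /n hq hs; lia.
  rewrite size_even ?hn; [rewrite L_even| lia | lia].
  set L := (8 * s * s + 40 * s + 45)%N.
  have E : (2 * (q * L) + 6 * q ^ 2 + q = q ^ 3)%N by rewrite hq hs /L; ring.
  apply: div2_help; move: E; set X := (q * L)%N; set Y := (q ^ 2)%N; set Z := (q ^ 3)%N; lia.
- have [s hs] : exists s, t = (s + 3)%N by exists (t - 3)%N; lia.
  have hn : n = (2 * s + 6)%N by rewrite /n hq hs; lia.
  rewrite size_even ?hn; [rewrite L_even| lia | lia].
  set L := (8 * s * s + 40 * s + 45)%N.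
  have E : (2 * (q * L) + 8 * q ^ 2 = q ^ 3 + 6 * q)%N by rewrite hq hs /L; ring.
  apply: div2_help; move: E; set X := (q * L)%N; set Y := (q ^ 2)%N; set Z := (q ^ 3)%N; lia.
- have [s hs] : exists s, t = (s + 2)%N by exists (t - 2)%N; lia.
  have hn : n = (2 * s + 5)%N by rewrite /n hq hs; lia.
  rewrite size_odd ?hn; [rewrite L_odd| lia | lia].
  set L := (8 * s * s + 36 * s + 37)%N.
  have E : (2 * (q * L) + 4 * q ^ 2 + 3 * q = q ^ 3)%N by rewrite hq hs /L; ring.
  apply: div2_help; move: E; set X := (q * L)%N; set Y := (q ^ 2)%N; set Z := (q ^ 3)%N; lia.
Qed.


Local Close Scope ring_scope.

Theorem corollary5p3 (q : nat) : (11 <= q)%N ->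
  exists s : nat -> 'Z_q, is_SOS 3 (cor53_period q) s.
Proof.
move=> q11; rewrite period_eq //; set n := q.-1./2.
have n5 : (5 <= n)%N by rewrite /n; lia.
have nq : (n * 2 < q)%N by rewrite /n; lia.
have Hm : forall j, (4 <= j)%N -> ((mfq n j).+1 < j)%N by move=> j; apply: mfq_ok.
apply: transfer.
- lia.
- by [].
- rewrite (perm_uniq (cp_W n (mfq n))) cat_uniq uniq_Big // andbT.
  apply/andP; split; first by vm_compute.
  apply/hasPn => x /mem_Big [j [i [/andP [j4 jn] /andP [i0 im] h3]]].
  apply/negP => /Pre_small.
  have h1 : (0 < i < j)%N by rewrite i0 (leq_ltn_trans im (Hm j j4)).
  by case: (bp_key h1 h3) => -> _; rewrite leqNgt j4.
- move=> x y; rewrite !(perm_mem (cp_W n (mfq n))) => hx hy; exact: good Hm hx hy.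
- move=> x xW; have := bound_W (leq_trans _ n5) Hm xW; lia.
- exact: sum_W.
Qed.
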